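(* Let $(\Gamma,\omega,\Phi)$ be a classical Poincaré-invariant system with timelike future-directed four-momentum $P$, and let $\chi$ be a position observable for it. Then $\chi$ is a centre of spin position observable if and only if, for every $(u,\tau)\in\mathsf{SpHP}$ and every $\gamma\in\Gamma$, $$u^\flat\wedge P^\flat\wedge\big(\iota_{u+\frac{P}{mc}}S(u)\big)=0,$$ where $S(u)_{\mu\nu}=J_{\mu\nu}-\chi_\mu(u,\tau)P_\nu+\chi_\nu(u,\tau)P_\mu$ and $\iota_v S$ denotes the one-form $S(v,\cdot)$.
   Context: Minkowski spacetime: affine space $M$ over a 4-dimensional real vector space $V$ with metric $\eta$ of signature $(-,+,+,+)$, fixed orientation and time orientation, fixed origin identifying $M$ with $V$. $u\cdot v:=\eta(u,v)$, $v^\flat=\eta(v,\cdot)$, indices lowered/raised with $\eta$; $\varepsilon$ is the volume form with $\varepsilon_{0123}=+1$ in positively oriented orthonormal bases; $c>0$. $\mathsf{SpHP}$ is the set of spacelike hyperplanes, each identified with $(u,\tau)$, $u$ future-directed unit timelike normal, $\Sigma=\{x:u\cdot x=-\tau\}$. A classical Poincaré-invariant system has phase-space functions $P_\mu$ (four-momentum) and $J_{\mu\nu}=-J_{\nu\mu}$ (angular momentum about the origin); $m=\sqrt{-P\cdot P}/c$. A position observable is a map $\chi\colon\mathsf{SpHP}\times\Gamma\to M$ with $u_\mu\chi^\mu(u,\tau)=-\tau$ and $\partial\chi_\mu(u,\tau)/\partial\tau=P_\mu/(-u\cdot P)$; its spin tensor is $S(u)_{\mu\nu}=J_{\mu\nu}-\chi_\mu(u,\tau)P_\nu+\chi_\nu(u,\tau)P_\mu$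 (independent of $\tau$). The Pauli–Lubański vector is $W_\mu=-\tfrac12\varepsilon_{\mu\nu\rho\sigma}P^\nu J^{\rho\sigma}$. The spin vector in the frame $u$ is $s(u)=B(u)\,W/(mc)$, where $B(u)$ is the boost $B^\mu{}_\nu(u)=\delta^\mu_\nu+\frac{(P^\mu/(mc)+u^\mu)(P_\nu/(mc)+u_\nu)}{1-u\cdot P/(mc)}-2\frac{u^\mu P_\nu}{mc}$ mapping $P/(mc)$ to $u$. A position observable $\chi$ is a centre of spin if $s_\mu(u)=-\tfrac12\varepsilon_{\mu\nu\rho\sigma}u^\nu S^{\rho\sigma}(u)$ for all $(u,\tau)$ and all phase-space points. *)

(* Defs.v *)
From HB Require Import structures.
From mathcomp Require Import all_boot all_order all_algebra.
From mathcomp Require Import all_classical all_reals all_analysis.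
Set Implicit Arguments. Unset Strict Implicit. Unset Printing Implicit Defensive.
Import Order.TTheory GRing.Theory Num.Theory.
Local Open Scope ring_scope.

(* Minkowski space identified with R^4 through a positively oriented,
   time-oriented orthonormal basis e_0,...,e_3 (e_0 future-directed timelike).
   A vector is given by its contravariant components v^mu. *)
Definition vec (R : realType) := 'I_4 -> R.

Section Mink.
Variable R : realType.

Definition etad (mu : 'I_4) : R := if mu == ord0 then -1 else 1.

Definition lower (v : vec R) : vec R := fun mu => etad mu * v mu.

Definition mdot (u v : vec R) : R := \sum_(mu < 4) etad mu * u mu * v mu.

(* Levi-Civita symbol with all indices down, epsilon_{0123} = +1:
   product of signs over pairs, = sign of the permutation or 0. *)
Definition eps (a b c d : 'I_4) : R :=
  let s (x y : 'I_4) : R := Num.sg ((y : nat)%:R - (x : nat)%:R : R) in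
  s a b * s a c * s a d * s b c * s b d * s c d.

(* future-directed unit timelike vectors: normals of spacelike hyperplanes *)
Definition unit_future (u : vec R) : Prop := mdot u u = -1 /\ 0 < u ord0.

(* a phase-space point carries P^mu (contravariant) and J_{mu nu} (covariant) *)

Definition mass (c : R) (P : vec R) : R := Num.sqrt (- mdot P P) / c.

Definition spin_tensor (J : 'I_4 -> 'I_4 -> R) (x P : vec R) (mu nu : 'I_4) : R :=
  J mu nu - lower x mu * lower P nu + lower x nu * lower P mu.

Definition raise2 (T : 'I_4 -> 'I_4 -> R) (mu nu : 'I_4) : R :=
  etad mu * etad nu * T mu nu.

Definition pauli_lubanski (P : vec R) (J : 'I_4 -> 'I_4 -> R) (mu : 'I_4) : R :=
  - (1/2) * \sum_(nu < 4) \sum_(rho < 4) \sum_(sg < 4)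
      eps mu nu rho sg * P nu * raise2 J rho sg.

(* Boost B^mu_nu(u) mapping P/(mc) to u *)
Definition boost (c : R) (u P : vec R) (mu nu : 'I_4) : R :=
  let p := fun i => P i / (mass c P * c) in
  (if mu == nu then 1 else 0)
  + (p mu + u mu) * (lower p nu + lower u nu) / (1 - mdot u p)
  - 2 * u mu * lower p nu.

Definition spin_vector (c : R) (u P : vec R) (J : 'I_4 -> 'I_4 -> R) (mu : 'I_4) : R :=
  \sum_(nu < 4) boost c u P mu nu * (etad nu * pauli_lubanski P J nu) / (mass c P * c).

Definition u_plus_p (c : R) (u P : vec R) : vec R :=
  fun mu => u mu + P mu / (mass c P * c).

Definition iprod (v : vec R) (S : 'I_4 -> 'I_4 -> R) (nu : 'I_4) : R :=
  \sum_(mu < 4) v mu * S mu nu.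

Definition wedge3 (a b c : vec R) (i j k : 'I_4) : R :=
    a i * (b j * c k - b k * c j)
  - a j * (b i * c k - b k * c i)
  + a k * (b i * c j - b j * c i).

(* chi : SpHP x Gamma -> M, with SpHP parametrised by (u, tau) *)
Definition position_observable (Gamma : Type) (P : Gamma -> vec R)
    (chi : vec R -> R -> Gamma -> vec R) : Prop :=
  forall (u : vec R), unit_future u -> forall (tau : R) (g : Gamma),
    mdot u (chi u tau g) = - tau /\
    forall mu : 'I_4,
      is_derive tau 1 (fun t : R => lower (chi u t g) mu)
                (lower (P g) mu / (- mdot u (P g))).

Definition centre_of_spin (c : R) (Gamma : Type) (P : Gamma -> vec R)
    (J : Gamma -> 'I_4 -> 'I_4 -> R) (chi : vec R -> R -> Gamma -> vec R) : Prop :=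
  forall (u : vec R), unit_future u -> forall (tau : R) (g : Gamma),
    forall mu : 'I_4,
      lower (spin_vector c u (P g) (J g)) mu =
      - (1/2) * \sum_(nu < 4) \sum_(rho < 4) \sum_(sg < 4)
          eps mu nu rho sg * u nu
            * raise2 (spin_tensor (J g) (chi u tau g) (P g)) rho sg.

End Mink.

(* Main.v *)
Require Import Defs.
From HB Require Import structures.
From mathcomp Require Import all_boot all_order all_algebra.
From mathcomp Require Import all_classical all_reals all_analysis.
From mathcomp Require Import ring lra.
Import Order.TTheory GRing.Theory Num.Theory.
Local Open Scope ring_scope.
Set Implicit Arguments. Unset Strict Implicit. Unset Printing Implicit Defensive.

Definition o0 : 'I_4 := @Ordinal 4 0 isT.
Definition o1 : 'I_4 := @Ordinal 4 1 isT.
Definition o2 : 'I_4 := @Ordinal 4 2 isT.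
Definition o3 : 'I_4 := @Ordinal 4 3 isT.

Lemma sum4 (R : realType) (F : 'I_4 -> R) : \sum_(i < 4) F i = F o0 + F o1 + F o2 + F o3.
Proof.
rewrite !big_ord_recl big_ord0 addr0 !addrA.
have E : forall i j : 'I_4, val i = val j -> F i = F j by move=> i j /val_inj ->.
by rewrite (E ord0 o0) // (E (lift ord0 ord0) o1) // (E (lift ord0 (lift ord0 ord0)) o2) // (E (lift ord0 (lift ord0 (lift ord0 ord0))) o3).
Qed.

Definition sgnn (R : realType) (x y : nat) : R := if (x < y)%N then 1 else if x == y then 0 else -1.

Lemma eps_E (R : realType) (a b c d : 'I_4) : eps R a b c d =
  sgnn R a b * sgnn R a c * sgnn R a d * sgnn R b c * sgnn R b d * sgnn R c d.
Proof.
have H : forall x y : 'I_4, Num.sg ((y : nat)%:R - (x : nat)%:R : R) = sgnn R x y.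
  move=> x y; rewrite /sgnn; case: ltngtP => h.
  - by apply: gtr0_sg; rewrite subr_gt0 ltr_nat.
  - by apply: ltr0_sg; rewrite subr_lt0 ltr_nat.
  - by rewrite h subrr sgr0.
by rewrite /eps !H.
Qed.



Lemma etadE (R : realType) : (etad R o0 = -1) * (etad R o1 = 1) * (etad R o2 = 1) * (etad R o3 = 1).
Proof. by rewrite /etad. Qed.
Lemma sg00 (R : realType) : sgnn R o0 o0 = 0. Proof. by []. Qed.
Lemma eq00 (R : realType) : (if o0 == o0 then 1 else 0 : R) = 1. Proof. by []. Qed.
Lemma sg01 (R : realType) : sgnn R o0 o1 = 1. Proof. by []. Qed.
Lemma eq01 (R : realType) : (if o0 == o1 then 1 else 0 : R) = 0. Proof. by []. Qed.
Lemma sg02 (R : realType) : sgnn R o0 o2 = 1. Proof. by []. Qed.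
Lemma eq02 (R : realType) : (if o0 == o2 then 1 else 0 : R) = 0. Proof. by []. Qed.
Lemma sg03 (R : realType) : sgnn R o0 o3 = 1. Proof. by []. Qed.
Lemma eq03 (R : realType) : (if o0 == o3 then 1 else 0 : R) = 0. Proof. by []. Qed.
Lemma sg10 (R : realType) : sgnn R o1 o0 = -1. Proof. by []. Qed.
Lemma eq10 (R : realType) : (if o1 == o0 then 1 else 0 : R) = 0. Proof. by []. Qed.
Lemma sg11 (R : realType) : sgnn R o1 o1 = 0. Proof. by []. Qed.
Lemma eq11 (R : realType) : (if o1 == o1 then 1 else 0 : R) = 1. Proof. by []. Qed.
Lemma sg12 (R : realType) : sgnn R o1 o2 = 1. Proof. by []. Qed.
Lemma eq12 (R : realType) : (if o1 == o2 then 1 else 0 : R) = 0. Proof. by []. Qed.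
Lemma sg13 (R : realType) : sgnn R o1 o3 = 1. Proof. by []. Qed.
Lemma eq13 (R : realType) : (if o1 == o3 then 1 else 0 : R) = 0. Proof. by []. Qed.
Lemma sg20 (R : realType) : sgnn R o2 o0 = -1. Proof. by []. Qed.
Lemma eq20 (R : realType) : (if o2 == o0 then 1 else 0 : R) = 0. Proof. by []. Qed.
Lemma sg21 (R : realType) : sgnn R o2 o1 = -1. Proof. by []. Qed.
Lemma eq21 (R : realType) : (if o2 == o1 then 1 else 0 : R) = 0. Proof. by []. Qed.
Lemma sg22 (R : realType) : sgnn R o2 o2 = 0. Proof. by []. Qed.
Lemma eq22 (R : realType) : (if o2 == o2 then 1 else 0 : R) = 1. Proof. by []. Qed.
Lemma sg23 (R : realType) : sgnn R o2 o3 = 1. Proof. by []. Qed.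
Lemma eq23 (R : realType) : (if o2 == o3 then 1 else 0 : R) = 0. Proof. by []. Qed.
Lemma sg30 (R : realType) : sgnn R o3 o0 = -1. Proof. by []. Qed.
Lemma eq30 (R : realType) : (if o3 == o0 then 1 else 0 : R) = 0. Proof. by []. Qed.
Lemma sg31 (R : realType) : sgnn R o3 o1 = -1. Proof. by []. Qed.
Lemma eq31 (R : realType) : (if o3 == o1 then 1 else 0 : R) = 0. Proof. by []. Qed.
Lemma sg32 (R : realType) : sgnn R o3 o2 = -1. Proof. by []. Qed.
Lemma eq32 (R : realType) : (if o3 == o2 then 1 else 0 : R) = 0. Proof. by []. Qed.
Lemma sg33 (R : realType) : sgnn R o3 o3 = 0. Proof. by []. Qed.
Lemma eq33 (R : realType) : (if o3 == o3 then 1 else 0 : R) = 1. Proof. by []. Qed.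
Ltac evsg := rewrite ?(sg00, eq00, sg01, eq01, sg02, eq02, sg03, eq03, sg10, eq10, sg11, eq11, sg12, eq12, sg13, eq13, sg20, eq20, sg21, eq21, sg22, eq22, sg23, eq23, sg30, eq30, sg31, eq31, sg32, eq32, sg33, eq33).

Lemma epsA0 (R : realType) (A : 'I_4 -> R) (B : 'I_4 -> 'I_4 -> R) :
  \sum_(nu < 4) \sum_(rho < 4) \sum_(sg < 4) eps R o0 nu rho sg * A nu * B rho sg = (A o1 * (B o2 o3 - B o3 o2) - A o2 * (B o1 o3 - B o3 o1) + A o3 * (B o1 o2 - B o2 o1)).
Proof. rewrite !sum4 !eps_E; evsg; ring. Qed.
Lemma epsB0 (R : realType) (a b v : 'I_4 -> R) :
  \sum_(al < 4) \sum_(be < 4) \sum_(ga < 4) eps R o0 al be ga * a al * b be * v ga = (a o1 * (b o2 * v o3 - b o3 * v o2) - a o2 * (b o1 * v o3 - b o3 * v o1) + a o3 * (b o1 * v o2 - b o2 * v o1)).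
Proof. rewrite !sum4 !eps_E; evsg; ring. Qed.
Lemma epsA1 (R : realType) (A : 'I_4 -> R) (B : 'I_4 -> 'I_4 -> R) :
  \sum_(nu < 4) \sum_(rho < 4) \sum_(sg < 4) eps R o1 nu rho sg * A nu * B rho sg = - (A o0 * (B o2 o3 - B o3 o2) - A o2 * (B o0 o3 - B o3 o0) + A o3 * (B o0 o2 - B o2 o0)).
Proof. rewrite !sum4 !eps_E; evsg; ring. Qed.
Lemma epsB1 (R : realType) (a b v : 'I_4 -> R) :
  \sum_(al < 4) \sum_(be < 4) \sum_(ga < 4) eps R o1 al be ga * a al * b be * v ga = - (a o0 * (b o2 * v o3 - b o3 * v o2) - a o2 * (b o0 * v o3 - b o3 * v o0) + a o3 * (b o0 * v o2 - b o2 * v o0)).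
Proof. rewrite !sum4 !eps_E; evsg; ring. Qed.
Lemma epsA2 (R : realType) (A : 'I_4 -> R) (B : 'I_4 -> 'I_4 -> R) :
  \sum_(nu < 4) \sum_(rho < 4) \sum_(sg < 4) eps R o2 nu rho sg * A nu * B rho sg = (A o0 * (B o1 o3 - B o3 o1) - A o1 * (B o0 o3 - B o3 o0) + A o3 * (B o0 o1 - B o1 o0)).
Proof. rewrite !sum4 !eps_E; evsg; ring. Qed.
Lemma epsB2 (R : realType) (a b v : 'I_4 -> R) :
  \sum_(al < 4) \sum_(be < 4) \sum_(ga < 4) eps R o2 al be ga * a al * b be * v ga = (a o0 * (b o1 * v o3 - b o3 * v o1) - a o1 * (b o0 * v o3 - b o3 * v o0) + a o3 * (b o0 * v o1 - b o1 * v o0)).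
Proof. rewrite !sum4 !eps_E; evsg; ring. Qed.
Lemma epsA3 (R : realType) (A : 'I_4 -> R) (B : 'I_4 -> 'I_4 -> R) :
  \sum_(nu < 4) \sum_(rho < 4) \sum_(sg < 4) eps R o3 nu rho sg * A nu * B rho sg = - (A o0 * (B o1 o2 - B o2 o1) - A o1 * (B o0 o2 - B o2 o0) + A o2 * (B o0 o1 - B o1 o0)).
Proof. rewrite !sum4 !eps_E; evsg; ring. Qed.
Lemma epsB3 (R : realType) (a b v : 'I_4 -> R) :
  \sum_(al < 4) \sum_(be < 4) \sum_(ga < 4) eps R o3 al be ga * a al * b be * v ga = - (a o0 * (b o1 * v o2 - b o2 * v o1) - a o1 * (b o0 * v o2 - b o2 * v o0) + a o2 * (b o0 * v o1 - b o1 * v o0)).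
Proof. rewrite !sum4 !eps_E; evsg; ring. Qed.

Definition sigmaw (R : realType) (w : vec R) (S : 'I_4 -> 'I_4 -> R) (mu : 'I_4) : R :=
  - (1/2) * \sum_(nu < 4) \sum_(rho < 4) \sum_(sg < 4) eps R mu nu rho sg * w nu * raise2 S rho sg.
Definition hodge3 (R : realType) (a b v : vec R) (mu : 'I_4) : R :=
  \sum_(al < 4) \sum_(be < 4) \sum_(ga < 4) eps R mu al be ga * a al * b be * v ga.

Lemma ord4_cases (i : 'I_4) : i = o0 \/ i = o1 \/ i = o2 \/ i = o3.
Proof.
case: i => [[|[|[|[|i]]]] Hi] //.
- by left; apply: val_inj.
- by right; left; apply: val_inj.
- by right; right; left; apply: val_inj.
- by right; right; right; apply: val_inj.
Qed.

Lemma key (R : realType) (c : R) (u P x : vec R) (J : 'I_4 -> 'I_4 -> R) (M : R)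
 (hJ : forall mu nu, J mu nu = - J nu mu) (hMass : mass c P * c = M) (hM : M != 0)
 (hk : 1 - mdot u (fun i => P i / M) != 0) (mu : 'I_4) :
 lower (spin_vector c u P J) mu - sigmaw u (spin_tensor J x P) mu =
 (etad R mu * hodge3 (lower u) (lower (fun i => P i / M)) (iprod (u_plus_p c u P) (spin_tensor J x P)) mu
  + sigmaw (fun i => P i / M) J mu * (mdot u u + 1)
  - sigmaw u (spin_tensor J x P) mu * (mdot (fun i => P i / M) (fun i => P i / M) + 1))
  / (1 - mdot u (fun i => P i / M)).
Proof.
have hd : forall i, J i i = 0.
  move=> i; have := hJ i i => /eqP; rewrite -subr_eq0 opprK -mulr2n mulrn_eq0 /=.
  by move/eqP.
case: (ord4_cases mu) => [->|[->|[->|->]]];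
rewrite /spin_vector /sigmaw /hodge3 hMass;
rewrite ?epsA0 ?epsA1 ?epsA2 ?epsA3 ?epsB0 ?epsB1 ?epsB2 ?epsB3;
rewrite /lower !sum4 /pauli_lubanski ?epsA0 ?epsA1 ?epsA2 ?epsA3;
move: hk;
rewrite /boost /mdot /iprod /u_plus_p /spin_tensor /raise2 /lower hMass !sum4; evsg;
rewrite !etadE !hd (hJ o1 o0) (hJ o2 o0) (hJ o3 o0) (hJ o2 o1) (hJ o3 o1) (hJ o3 o2);
move=> hk;
match goal with |- @eq _ ?a ?b => change (@eq R a b) end; field;
(rewrite hM /=; apply: contra hk => /eqP h; apply/eqP; apply: (mulfI hM);
 rewrite mulr0 -{}h; field; rewrite ?hM //).
Qed.

Lemma hodge_wedge (R : realType) (a b v : vec R) :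
  (forall mu, hodge3 a b v mu = 0) <-> (forall i j k, wedge3 a b v i j k = 0).
Proof.
split.
- move=> H i j k.
  have -> : wedge3 a b v i j k = \sum_(mu < 4) eps R mu i j k * hodge3 a b v mu.
    rewrite sum4 /hodge3 epsB0 epsB1 epsB2 epsB3 /wedge3.
    case: (ord4_cases i) => [->|[->|[->|->]]];
    case: (ord4_cases j) => [->|[->|[->|->]]];
    case: (ord4_cases k) => [->|[->|[->|->]]];
    rewrite !eps_E; evsg; ring.
  by rewrite big1 // => mu _; rewrite H mulr0.
- move=> H mu; case: (ord4_cases mu) => [->|[->|[->|->]]];
  rewrite /hodge3 ?epsB0 ?epsB1 ?epsB2 ?epsB3.
  + exact: (H o1 o2 o3).
  + by have := H o0 o2 o3; rewrite /wedge3 => ->; rewrite oppr0.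
  + exact: (H o0 o1 o3).
  + by have := H o0 o1 o2; rewrite /wedge3 => ->; rewrite oppr0.
Qed.

Lemma revCS (R : realType) (u p : vec R) : mdot u u = -1 -> mdot p p = -1 ->
  0 < u o0 -> 0 < p o0 -> mdot u p < 0.
Proof.
rewrite /mdot !sum4 !etadE.
move: (u o0) (u o1) (u o2) (u o3) (p o0) (p o1) (p o2) (p o3) => a u1 u2 u3 b p1 p2 p3.
move=> hu hp ha hb.
set d := u1 * p1 + u2 * p2 + u3 * p3.
have lag : d ^+ 2 <= (u1 ^+ 2+u2 ^+ 2+u3 ^+ 2)*(p1 ^+ 2+p2 ^+ 2+p3 ^+ 2).
  rewrite -subr_ge0.
  have -> : (u1 ^+ 2+u2 ^+ 2+u3 ^+ 2)*(p1 ^+ 2+p2 ^+ 2+p3 ^+ 2) - d ^+ 2 =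
    (u1 * p2 - u2 * p1) ^+ 2 + (u1 * p3 - u3 * p1) ^+ 2 + (u2 * p3 - u3 * p2) ^+ 2 by rewrite /d; ring.
  by rewrite !addr_ge0 ?sqr_ge0.
have ha2 : a ^+ 2 = 1 + (u1 ^+ 2+u2 ^+ 2+u3 ^+ 2) by lra.
have hb2 : b ^+ 2 = 1 + (p1 ^+ 2+p2 ^+ 2+p3 ^+ 2) by lra.
have hU : 0 <= u1 ^+ 2+u2 ^+ 2+u3 ^+ 2 by rewrite !addr_ge0 ?sqr_ge0.
have hQ : 0 <= p1 ^+ 2+p2 ^+ 2+p3 ^+ 2 by rewrite !addr_ge0 ?sqr_ge0.
have hab : d ^+ 2 < (a*b) ^+ 2 by rewrite exprMn ha2 hb2; nra.
have hab0 : 0 < a * b by rewrite mulr_gt0.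
have : d < a * b by nra.
rewrite /d; lra.
Qed.

Lemma pointwise (R : realType) (c : R) (hc : 0 < c) (u P x : vec R) (J : 'I_4 -> 'I_4 -> R)
  (hJ : forall mu nu, J mu nu = - J nu mu) (hPP : mdot P P < 0) (hP0 : 0 < P ord0)
  (hu : unit_future u) :
  (forall mu, lower (spin_vector c u P J) mu = sigmaw u (spin_tensor J x P) mu) <->
  (forall i j k, wedge3 (lower u) (lower P) (iprod (u_plus_p c u P) (spin_tensor J x P)) i j k = 0).
Proof.
have ho : o0 = ord0 by apply: val_inj.
set M := mass c P * c.
have hMdef : M = Num.sqrt (- mdot P P) by rewrite /M /mass divfK // gt_eqF.
have hMpos : 0 < M by rewrite hMdef sqrtr_gt0 oppr_gt0.
have hM : M != 0 by rewrite gt_eqF.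
have hM2 : M ^+ 2 = - mdot P P by rewrite hMdef sqr_sqrtr // oppr_ge0 ltW.
have hpp : mdot (fun i => P i / M) (fun i => P i / M) = -1.
  have -> : mdot (fun i => P i / M) (fun i => P i / M) = mdot P P / M ^+ 2.
    by rewrite /mdot !sum4; field.
  by rewrite hM2 invrN mulrN divff // lt_eqF.
have hp0 : 0 < (fun i => P i / M) o0 by rewrite /= ho divr_gt0.
case: hu => huu hu0.
have hu0' : 0 < u o0 by rewrite ho.
have hup := revCS huu hpp hu0' hp0.
have hk : 1 - mdot u (fun i => P i / M) != 0 by apply: lt0r_neq0; rewrite subr_gt0; lra.
set v := iprod (u_plus_p c u P) (spin_tensor J x P).
have E : forall mu, lower (spin_vector c u P J) mu - sigmaw u (spin_tensor J x P) mu =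
   etad R mu * hodge3 (lower u) (lower (fun i => P i / M)) v mu / (1 - mdot u (fun i => P i / M)).
  by move=> mu; rewrite (key x hJ (erefl M) hM hk mu) huu hpp addNr !mulr0 addr0 subr0.
have hW : forall i j k, wedge3 (lower u) (lower P) v i j k = M * wedge3 (lower u) (lower (fun i => P i / M)) v i j k.
  by move=> i j k; rewrite /wedge3 /lower /=; field.
have hetad : forall mu, etad R mu != 0.
  by move=> mu; rewrite /etad; case: ifP => _; rewrite ?oppr_eq0 oner_neq0.
split.
- move=> H i j k; rewrite hW.
  suff -> : wedge3 (lower u) (lower (fun i => P i / M)) v i j k = 0 by rewrite mulr0.
  move: i j k; apply/hodge_wedge => mu.
  have := E mu; rewrite H subrr => /esym /eqP.
  rewrite !mulf_eq0 invr_eq0 (negbTE hk) orbF (negbTE (hetad mu)) /= => /eqP //.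
- move=> H mu; apply/eqP; rewrite -subr_eq0 E.
  have H' : forall i j k, wedge3 (lower u) (lower (fun i => P i / M)) v i j k = 0.
    move=> i j k; have := H i j k; rewrite hW => /eqP.
    by rewrite mulf_eq0 (negbTE hM) /= => /eqP.
  by have := (proj2 (hodge_wedge _ _ _) H' mu) => ->; rewrite mulr0 mul0r.
Qed.

Unset Implicit Arguments.

Theorem mainTheorem2 (R : realType) (c : R) (hc : 0 < c)
  (Gamma : Type) (P : Gamma -> vec R) (J : Gamma -> 'I_4 -> 'I_4 -> R)
  (hJ : forall g mu nu, J g mu nu = - J g nu mu)
  (hP : forall g, mdot (P g) (P g) < 0 /\ 0 < P g ord0)
  (chi : vec R -> R -> Gamma -> vec R)
  (hchi : position_observable P chi) :
  centre_of_spin c P J chi <->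
  (forall (u : vec R), unit_future u -> forall (tau : R) (g : Gamma),
     forall i j k : 'I_4,
       wedge3 (lower u) (lower (P g))
         (iprod (u_plus_p c u (P g))
               (spin_tensor (J g) (chi u tau g) (P g))) i j k = 0).
Proof.
split.
- move=> Hc u hu tau g.
  apply: (proj1 (@pointwise R c hc u (P g) (chi u tau g) (J g) (hJ g) (proj1 (hP g)) (proj2 (hP g)) hu)).
  exact: Hc u hu tau g.
- move=> Hw u hu tau g.
  exact: (proj2 (@pointwise R c hc u (P g) (chi u tau g) (J g) (hJ g) (proj1 (hP g)) (proj2 (hP g)) hu) (Hw u hu tau g)).
Qed.
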